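(* Let $M_1,M'_1\subset\mathbb C^{N_1}$ be generic real-analytic submanifolds through $0$ of the same dimension. Let $M:=M_1\times\{0\}$ and $M':=M'_1\times\{0\}$, both contained in $\mathbb C^N=\mathbb C^{N_1}\times\mathbb C^{N_2}$, and let $H$ be a $k$-equivalence between $(M,0)$ and $(M',0)$ with $k>1$. Write $Z=(Z^1,Z^2)$ and $H=(H^1,H^2)$ according to this decomposition. Then $H^2(Z^1,0)=O(|Z^1|^k)$, and $Z^1\mapsto H^1(Z^1,0)$ is a $k$-equivalence between $(M_1,0)$ and $(M'_1,0)$.
   Context: A real-analytic submanifold with local defining function $\rho=(\rho^1,\dots,\rho^d)$ is generic if the complex gradients $\rho^j_Z$ are linearly independent at each point. For real-analytic submanifolds $M,M'$ of $\mathbb C^m$ through $0$ of the same dimension and $k>1$, a $k$-equivalence between $(M,0)$ and $(M',0)$ is an invertible formal map $H(Z)=\sum_{|\alpha|\ge1}a_\alpha Z^\alpha$ ($a_\alpha\in\mathbb C^m$, nonzero Jacobian at $0$) with $\rho'(H(Z(x)),\overline{H(Z(x))})=O(|x|^k)$ for some (equivalently any) real-analytic parametrization $x\mapsto Z(x)$ of $M$ near $0=Z(0)$, where $\rho'$ is a local defining function of $M'$. *)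

(* Defs.v *)
From HB Require Import structures.
From mathcomp Require Import all_boot all_order all_algebra.
From mathcomp Require Import complex.
From mathcomp Require Import reals.
From mathcomp Require Import mpoly.

Set Implicit Arguments.
Unset Strict Implicit.
Unset Printing Implicit Defensive.

Import Order.TTheory GRing.Theory Num.Theory.
Local Open Scope ring_scope.

Definition pseries (R : realType) (n : nat) := 'X_{1..n} -> R[i].

Definition sX (R : realType) (n : nat) (i : 'I_n) : pseries R n :=
  fun mu => if mu == mnm1 i then 1 else 0.

Definition szero (R : realType) (n : nat) : pseries R n := fun _ => 0.

(* coefficientwise complex conjugation (the conjugate of a series in
   REAL variables, or of a series written in (Z, Zbar)) *)
Definition sconj (R : realType) (n : nat) (f : pseries R n) : pseries R n :=
  fun mu => conjc (f mu).

Definition strunc (R : realType) (n : nat) (d : nat) (f : pseries R n)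
  : {mpoly (complex R)[n]} :=
  \sum_(mu : 'X_{1..n < d.+1}) f mu *: 'X_[(mu : 'X_{1..n})].

(* formal composition F(G_1, ..., G_m) of a series F in m variables with
   m series G_i in n variables WITHOUT constant term (the only case used
   below): the coefficient of x^mu only depends on the terms of degree
   <= |mu| of F and of the G_i. *)
Definition scomp (R : realType) (m n : nat) (F : pseries R m)
  (G : 'I_m -> pseries R n) : pseries R n :=
  fun mu => (comp_mpoly [tuple strunc (mdeg mu) (G i) | i < m]
                        (strunc (mdeg mu) F))@_mu.

Definition ord_ge (R : realType) (n : nat) (k : nat) (f : pseries R n) :=
  forall mu : 'X_{1..n}, (mdeg mu < k)%N -> f mu = 0.

(* convergent power series (= germ at 0 of a real-analytic function):
   Cauchy-type coefficient bound *)
Definition convergent (R : realType) (n : nat) (f : pseries R n) :=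
  exists c r : R, 0 < r /\
    forall mu, `|f mu| <= ((c * r ^+ mdeg mu)%:C)%C.

(* Real-analytic functions on C^m are written as series rho(Z, Zbar)   *)
(* in 2m variables indexed by 'I_(m + m): lshift m a is Z_a and         *)
(* rshift m a is Zbar_a.                                               *)
Definition swapZ (m : nat) (i : 'I_(m + m)) : 'I_(m + m) :=
  match split i with inl a => rshift m a | inr a => lshift m a end.

Definition real_valued (R : realType) (m : nat) (rho : pseries R (m + m)) :=
  forall mu : 'X_{1..m + m},
    rho [multinom mu (swapZ i) | i < m + m] = conjc (rho mu).

(* real Jacobian at 0 w.r.t. the real coordinates x_a = Re Z_a,
   y_a = Im Z_a (columns lshift a for x_a, rshift a for y_a):
   d rho/dx_a = rho_{Z_a} + rho_{Zbar_a},  d rho/dy_a = i (rho_{Z_a} - rho_{Zbar_a}) *)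
Definition real_jac0 (R : realType) (m d : nat) (rho : 'I_d -> pseries R (m + m))
  : 'M[R]_(d, m + m) :=
  \matrix_(j, i)
    complex.Re (match split i with
        | inl a => rho j (mnm1 (lshift m a)) + rho j (mnm1 (rshift m a))
        | inr a => 'i%C * (rho j (mnm1 (lshift m a)) - rho j (mnm1 (rshift m a)))
        end).

Definition defining_fun (R : realType) (m d : nat)
  (rho : 'I_d -> pseries R (m + m)) :=
  [/\ forall j, rho j 0%MM = 0,
      forall j, convergent (rho j),
      forall j, real_valued (rho j)
    & row_free (real_jac0 rho)].

Definition cgrad0 (R : realType) (m d : nat) (rho : 'I_d -> pseries R (m + m))
  : 'M[R[i]]_(d, m) :=
  \matrix_(j, a) rho j (mnm1 (lshift m a)).

(* genericity: the complex gradients rho^j_Z are C-linearly independent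
   (at 0, hence at every point near 0) *)
Definition generic (R : realType) (m d : nat) (rho : 'I_d -> pseries R (m + m)) :=
  row_free (cgrad0 rho).

(* (W, Wbar) as the 2m-tuple of series to be plugged into rho(Z, Zbar) *)
Definition sconjZ (R : realType) (m n : nat) (W : 'I_m -> pseries R n)
  : 'I_(m + m) -> pseries R n :=
  fun i => match split i with inl a => W a | inr a => sconj (W a) end.

Definition param_jac0 (R : realType) (m n : nat) (Z : 'I_m -> pseries R n)
  : 'M[R]_(m + m, n) :=
  \matrix_(i, b)
    match split i with
    | inl a => complex.Re (Z a (mnm1 b))
    | inr a => complex.Im (Z a (mnm1 b))
    end.

(* x |-> Z(x), x in R^n, is a real-analytic parametrization near 0 of the
   submanifold M = {rho = 0} (of dimension n = 2m - d) with Z(0) = 0: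
   a real-analytic immersion with values in M. *)
Definition param (R : realType) (m d n : nat) (rho : 'I_d -> pseries R (m + m))
  (Z : 'I_m -> pseries R n) :=
  [/\ (n + d = m + m)%N,
      forall a, Z a 0%MM = 0,
      forall a, convergent (Z a),
      forall j mu, scomp (rho j) (sconjZ Z) mu = 0
    & \rank (param_jac0 Z) = n].

Definition formal_inv (R : realType) (m : nat) (H : 'I_m -> pseries R m) :=
  (forall a, H a 0%MM = 0) /\
  (\matrix_(a, b) H a (mnm1 b) : 'M[R[i]]_m) \in unitmx.

Definition kequiv (R : realType) (m d : nat) (k : nat)
  (rho rho' : 'I_d -> pseries R (m + m)) (H : 'I_m -> pseries R m) :=
  formal_inv H /\
  exists (n : nat) (Z : 'I_m -> pseries R n),
    param rho Z /\
    forall j, ord_ge k (scomp (rho' j) (sconjZ (fun a => scomp (H a) Z))).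

(* Products: C^N = C^N1 x C^N2, coordinates lshift N2 a (Z^1) and      *)
(* rshift N1 b (Z^2).                                                  *)

(* the variables (Z^1, Zbar^1) inside (Z, Zbar) *)
Definition emb1 (N1 N2 : nat) (i : 'I_(N1 + N1)) : 'I_((N1 + N2) + (N1 + N2)) :=
  match split i with
  | inl a => lshift (N1 + N2) (lshift N2 a)
  | inr a => rshift (N1 + N2) (lshift N2 a)
  end.

(* defining function of M_1 x {0} built from a defining function rho1 of
   M_1: (rho1(Z^1, Zbar^1), Re Z^2, Im Z^2) *)
Definition prod_def (R : realType) (N1 N2 d1 : nat)
  (rho1 : 'I_d1 -> pseries R (N1 + N1))
  : 'I_(d1 + (N2 + N2)) -> pseries R ((N1 + N2) + (N1 + N2)) :=
  fun j =>
    match split j with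
    | inl j1 => scomp (rho1 j1) (fun i => @sX R _ (emb1 N2 i))
    | inr t =>
      match split t with
      | inl b => fun mu =>
          (@sX R _ (lshift (N1 + N2) (rshift N1 b)) mu
           + @sX R _ (rshift (N1 + N2) (rshift N1 b)) mu) / 2%:R
      | inr b => fun mu =>
          (@sX R _ (lshift (N1 + N2) (rshift N1 b)) mu
           - @sX R _ (rshift (N1 + N2) (rshift N1 b)) mu) / (2%:R * 'i%C)
      end
    end.

Definition restr1 (R : realType) (N1 N2 : nat) (f : pseries R (N1 + N2))
  : pseries R N1 :=
  scomp f (fun i => match split i with inl a => @sX R _ a | inr _ => @szero R N1 end).

(* Main.v *)
Require Import Defs.
From HB Require Import structures.
From mathcomp Require Import all_boot all_order all_algebra.
From mathcomp Require Import complex.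
From mathcomp Require Import reals.
From mathcomp Require Import mpoly.
From mathcomp Require Import zify.
From mathcomp Require Import ring lra.
From Stdlib Require Import FunctionalExtensionality.

Set Implicit Arguments.
Unset Strict Implicit.
Unset Printing Implicit Defensive.
Import Order.TTheory GRing.Theory Num.Theory.
Section Ord.
Local Open Scope ring_scope.
Variables (n : nat) (R : comRingType).
Implicit Types (p q : {mpoly R[n]}).

Definition ordge e p := forall m : 'X_{1..n}, (mdeg m < e)%N -> p@_m = 0.

Lemma ordge0 e : ordge e 0.
Proof. by move=> m _; rewrite mcoeff0. Qed.

Lemma ordge_le e e' p : (e' <= e)%N -> ordge e p -> ordge e' p.
Proof. move=> le h m hm; apply: h; lia. Qed.

Lemma ordge_0 p : ordge 0 p.
Proof. by move=> m. Qed.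

Lemma ordgeD e p q : ordge e p -> ordge e q -> ordge e (p + q).
Proof. by move=> hp hq m hm; rewrite mcoeffD hp ?hq ?addr0. Qed.

Lemma ordgeN e p : ordge e p -> ordge e (- p).
Proof. by move=> hp m hm; rewrite mcoeffN hp ?oppr0. Qed.

Lemma ordgeB e p q : ordge e p -> ordge e q -> ordge e (p - q).
Proof. by move=> hp hq; apply: ordgeD => //; apply: ordgeN. Qed.

Lemma ordgeZ e c p : ordge e p -> ordge e (c *: p).
Proof. by move=> hp m hm; rewrite mcoeffZ hp ?mulr0. Qed.

Lemma ordge_sum e (I : Type) (r : seq I) (P : pred I) (F : I -> {mpoly R[n]}) :
  (forall i, P i -> ordge e (F i)) -> ordge e (\sum_(i <- r | P i) F i).
Proof.
move=> h; elim/big_rec: _ => [|i x Pi hx]; first exact: ordge0.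
by apply: ordgeD => //; apply: h.
Qed.

Lemma ordgeM a b p q : ordge a p -> ordge b q -> ordge (a + b) (p * q).
Proof.
move=> hp hq m hm; rewrite mcoeffM big1 // => k /eqP hk.
have h : (mdeg k.1 + mdeg k.2 < a + b)%N by rewrite -mdegD -hk.
case: (ltnP (mdeg k.1) a) => h1; first by rewrite hp ?mul0r.
rewrite hq ?mulr0 //. move: h h1. set x := mdeg k.1. set y := mdeg k.2. lia.
Qed.

Lemma ordgeX e p k : ordge e p -> ordge (e * k) (p ^+ k).
Proof.
move=> hp; elim: k => [|k ih]; first by rewrite muln0; exact: ordge_0.
by rewrite exprS mulnS; apply: ordgeM.
Qed.

Lemma ordge_prod (I : Type) (r : seq I) (P : pred I) (E : I -> nat) (F : I -> {mpoly R[n]}) :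
  (forall i, ordge (E i) (F i)) -> ordge (\sum_(i <- r | P i) E i) (\prod_(i <- r | P i) F i).
Proof.
move=> h; elim/big_rec2: _ => [|i s p _ hp]; first exact: ordge_0.
exact: ordgeM.
Qed.

Lemma ordge_congrM e a a' b b' : ordge e (a - a') -> ordge e (b - b') ->
  ordge e (a * b - a' * b').
Proof.
move=> ha hb.
have -> : a * b - a' * b' = (a - a') * b + a' * (b - b').
  by rewrite mulrBl mulrBr addrA subrK.
apply: ordgeD; first by rewrite -[e]addn0; apply: ordgeM => //; exact: ordge_0.
by rewrite -[e]add0n; apply: ordgeM => //; exact: ordge_0.
Qed.

Definition near e p q := [/\ ordge e p, ordge e q & ordge e.+1 (p - q)].

Lemma nearM e f a a' b b' : near e a a' -> near f b b' -> near (e + f) (a * b) (a' * b').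
Proof.
move=> [h1 h2 h3] [h4 h5 h6]; split; try exact: ordgeM.
have -> : a * b - a' * b' = (a - a') * b + a' * (b - b').
  by rewrite mulrBl mulrBr addrA subrK.
apply: ordgeD; first by rewrite -addSn; apply: ordgeM.
by rewrite -addnS; apply: ordgeM.
Qed.

Lemma near1 : near 0 (1 : {mpoly R[n]}) 1.
Proof. by split; try exact: ordge_0; rewrite subrr; exact: ordge0. Qed.

Lemma nearX e p q k : near e p q -> near (e * k) (p ^+ k) (q ^+ k).
Proof.
move=> h; elim: k => [|k ih]; first by rewrite muln0 !expr0; exact: near1.
by rewrite !exprS mulnS; apply: nearM.
Qed.

End Ord.

Section Comp.
Local Open Scope ring_scope.
Variables (n k : nat) (R : comRingType).

Lemma comp_ordge e (lq : n.-tuple {mpoly R[k]}) (p : {mpoly R[n]}) :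
  (forall i, ordge 1 (tnth lq i)) -> ordge e p -> ordge e (p \mPo lq).
Proof.
move=> hq hp; rewrite comp_mpolyEX; apply: ordge_sum => m _.
case: (ltnP (mdeg m) e) => hm; first by rewrite hp // scale0r; exact: ordge0.
apply: ordgeZ; rewrite comp_mpolyX; apply: (ordge_le hm).
rewrite mdegE; apply: ordge_prod => i.
by have := ordgeX (k := m i) (hq i); rewrite mul1n.
Qed.

Lemma comp_congr e (lq lq' : n.-tuple {mpoly R[k]}) (p : {mpoly R[n]}) :
  (forall i, ordge e (tnth lq i - tnth lq' i)) ->
  ordge e ((p \mPo lq) - (p \mPo lq')).
Proof.
move=> h; rewrite !comp_mpolyEX.
have sB : forall (F G : 'X_{1..n} -> {mpoly R[k]}), \sum_(m <- msupp p) F m - \sum_(m <- msupp p) G m = \sum_(m <- msupp p) (F m - G m).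
  by move=> F G; rewrite sumrB.
rewrite sB; apply: ordge_sum => m _.
rewrite -scalerBr; apply: ordgeZ; rewrite !comp_mpolyX.
elim/big_rec2: _ => [|i x y _ hxy]; first by rewrite subrr; exact: ordge0.
apply: ordge_congrM => //.
elim: (m i) => [|j ih]; first by rewrite !expr0 subrr; exact: ordge0.
by rewrite !exprS; apply: ordge_congrM.
Qed.

Lemma comp_near e (lq lq' : n.-tuple {mpoly R[k]}) (p : {mpoly R[n]}) :
  (forall i, near 1 (tnth lq i) (tnth lq' i)) -> ordge e p ->
  ordge e.+1 ((p \mPo lq) - (p \mPo lq')).
Proof.
move=> h hp; rewrite !comp_mpolyEX.
have sB : forall (F G : 'X_{1..n} -> {mpoly R[k]}), \sum_(m <- msupp p) F m - \sum_(m <- msupp p) G m = \sum_(m <- msupp p) (F m - G m).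
  by move=> F G; rewrite sumrB.
rewrite sB; apply: ordge_sum => m _.
rewrite -scalerBr.
case: (ltnP (mdeg m) e) => hm; first by rewrite hp // scale0r; exact: ordge0.
apply: ordgeZ; rewrite !comp_mpolyX.
have : near (mdeg m) (\prod_i tnth lq i ^+ m i) (\prod_i tnth lq' i ^+ m i).
  rewrite mdegE; elim/big_rec3: _ => [|i s x y _ hxy]; first exact: near1.
  by apply: nearM => //; have := nearX (m i) (h i); rewrite mul1n.
by case=> _ _ /(ordge_le _); apply; rewrite ltnS.
Qed.

Lemma comp_mpolyA (l : nat) (lq : k.-tuple {mpoly R[l]}) (lr : n.-tuple {mpoly R[k]})
  (p : {mpoly R[n]}) :
  (p \mPo lr) \mPo lq = p \mPo [tuple (tnth lr i) \mPo lq | i < n].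
Proof.
rewrite [p \mPo lr]comp_mpolyEX [p \mPo _]comp_mpolyEX raddf_sum /=.
apply: eq_bigr => m _; rewrite comp_mpolyZ; congr (_ *: _).
rewrite !comp_mpolyX rmorph_prod /=; apply: eq_bigr => i _.
by rewrite rmorphXn /= tnth_map tnth_ord_tuple.
Qed.

End Comp.

Section Ser.
Local Open Scope ring_scope.
Variable R : realType.
Local Notation C := (complex R).

Lemma mcoeff_sum n (I : Type) (r : seq I) (P : pred I) (F : I -> {mpoly C[n]}) m :
  (\sum_(i <- r | P i) F i)@_m = \sum_(i <- r | P i) (F i)@_m.
Proof. exact: raddf_sum. Qed.

Lemma comp_sum n k (lq : n.-tuple {mpoly C[k]}) (I : Type) (r : seq I) (P : pred I) (F : I -> {mpoly C[n]}) :
  (\sum_(i <- r | P i) F i) \mPo lq = \sum_(i <- r | P i) (F i \mPo lq).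
Proof. exact: (raddf_sum (comp_mpoly lq)). Qed.

Lemma mcoeff_strunc n d (f : pseries R n) (m : 'X_{1..n}) :
  (strunc d f)@_m = if (mdeg m <= d)%N then f m else 0.
Proof.
rewrite /strunc raddf_sum /=.
under eq_bigr do rewrite mcoeffZ mcoeffX.
case: ifP => h.
  have h' : (mdeg m < d.+1)%N by [].
  rewrite (bigD1 (BMultinom h')) //= eqxx mulr1 big1 ?addr0 // => mu hmu.
  have -> : (bmnm mu == m) = false.
    by apply/negbTE; move: hmu; rewrite bmeqP.
  by rewrite mulr0.
rewrite big1 // => mu _.
have -> : (bmnm mu == m) = false.
  apply/negbTE/eqP => e; move: (bmdeg mu); rewrite e ltnS h //.
by rewrite mulr0.
Qed.

Lemma mdeg0_eq m' (m : 'X_{1..m'}) : (mdeg m < 1)%N -> m = 0%MM.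
Proof. by rewrite ltnS leqn0 mdeg_eq0 => /eqP. Qed.

Lemma strunc_ordge1 n d (g : pseries R n) : g 0%MM = 0 -> ordge 1 (strunc d g).
Proof. by move=> h m /mdeg0_eq ->; rewrite mcoeff_strunc mdeg0 /= h. Qed.

Lemma scomp_spec m' n (F : pseries R m') (G : 'I_m' -> pseries R n)
  (P : {mpoly C[m']}) (Q : m'.-tuple {mpoly C[n]}) D D' mu :
  (mdeg mu <= D)%N -> (mdeg mu <= D')%N ->
  (forall m, (mdeg m <= D)%N -> P@_m = F m) ->
  (forall i m, (mdeg m <= D')%N -> (tnth Q i)@_m = G i m) ->
  (forall i, ordge 1 (tnth Q i)) ->
  scomp F G mu = (P \mPo Q)@_mu.
Proof.
move=> hD hD' hP hQ hQ1; rewrite /scomp.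
set d := mdeg mu.
set T := [tuple strunc d (G i) | i < m'].
have hT : forall i, ordge 1 (tnth T i).
  move=> i; rewrite tnth_map tnth_ord_tuple; apply: strunc_ordge1.
  by rewrite -hQ ?mdeg0 // (hQ1 i) // mdeg0.
have e1 : ordge d.+1 ((strunc d F \mPo T) - (P \mPo T)).
  rewrite -raddfB /=; apply: comp_ordge => // m hm.
  rewrite mcoeffB mcoeff_strunc -ltnS hm hP ?subrr //.
  by apply: leq_trans hD; rewrite -ltnS.
have e2 : ordge d.+1 ((P \mPo T) - (P \mPo Q)).
  apply: comp_congr => i m hm.
  rewrite mcoeffB tnth_map tnth_ord_tuple mcoeff_strunc -ltnS hm hQ ?subrr //.
  by apply: leq_trans hD'; rewrite -ltnS.
have := ordgeD e1 e2 (ltnSn d).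
by rewrite addrA subrK mcoeffB => /eqP; rewrite subr_eq0 => /eqP.
Qed.

Definition Tr n m' d (G : 'I_m' -> pseries R n) := [tuple strunc d (G i) | i < m'].

Lemma Tr_coef n m' d (G : 'I_m' -> pseries R n) i m :
  (mdeg m <= d)%N -> (tnth (Tr d G) i)@_m = G i m.
Proof. by move=> h; rewrite tnth_map tnth_ord_tuple mcoeff_strunc h. Qed.

Lemma Tr_ordge n m' d (G : 'I_m' -> pseries R n) :
  (forall i, G i 0%MM = 0) -> forall i, ordge 1 (tnth (Tr d G) i).
Proof. by move=> h i; rewrite tnth_map tnth_ord_tuple; apply: strunc_ordge1. Qed.

Lemma scomp_specT m' n (F : pseries R m') (G : 'I_m' -> pseries R n)
  (P : {mpoly C[m']}) mu :
  (forall i, G i 0%MM = 0) ->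
  (forall m, (mdeg m <= mdeg mu)%N -> P@_m = F m) ->
  scomp F G mu = (P \mPo Tr (mdeg mu) G)@_mu.
Proof.
move=> hG hP; apply: (scomp_spec (D := mdeg mu) (D' := mdeg mu)) => //.
  by move=> i m; apply: Tr_coef.
exact: Tr_ordge.
Qed.

Lemma scomp_sX m' n (G : 'I_m' -> pseries R n) i mu :
  (forall i, G i 0%MM = 0) -> scomp (@sX R m' i) G mu = G i mu.
Proof.
move=> hG; rewrite (@scomp_specT _ _ _ _ 'X_i) //.
  by rewrite comp_mpolyXU -tnth_nth Tr_coef.
by move=> m _; rewrite mcoeffX /sX eq_sym; case: eqP.
Qed.

Lemma scomp_szero m' n (G : 'I_m' -> pseries R n) mu :
  (forall i, G i 0%MM = 0) -> scomp (@szero R m') G mu = 0.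
Proof.
move=> hG; rewrite (@scomp_specT _ _ _ _ 0) //.
  by rewrite comp_mpoly0 mcoeff0.
by move=> m _; rewrite mcoeff0.
Qed.

Lemma scomp_lin2 m' n (F : pseries R m') (G : 'I_m' -> pseries R n) a b l r mu :
  (forall i, G i 0%MM = 0) ->
  (forall m, F m = a * @sX R m' l m + b * @sX R m' r m) ->
  scomp F G mu = a * G l mu + b * G r mu.
Proof.
move=> hG hF; rewrite (@scomp_specT _ _ _ _ (a *: 'X_l + b *: 'X_r)) //.
  rewrite raddfD /= !comp_mpolyZ !comp_mpolyXU -!tnth_nth mcoeffD !mcoeffZ.
  by rewrite !Tr_coef.
move=> m _; rewrite hF mcoeffD !mcoeffZ !mcoeffX /sX.
by rewrite ![_ == m]eq_sym; case: eqP; case: eqP; rewrite ?mulr0 ?mulr1.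
Qed.

Lemma scomp_at0 m' n (F : pseries R m') (G : 'I_m' -> pseries R n) :
  (forall i, G i 0%MM = 0) -> scomp F G 0%MM = F 0%MM.
Proof.
move=> hG; rewrite (@scomp_specT _ _ _ _ (F 0%MM)%:MP) //.
  by rewrite comp_mpolyC mcoeffC eqxx mulr1.
move=> m; rewrite mdeg0 leqn0 mdeg_eq0 => /eqP ->.
by rewrite mcoeffC eqxx mulr1.
Qed.

Lemma mnm1_inj m' (i j : 'I_m') : (U_(i) == U_(j))%MM = (i == j).
Proof.
apply/idP/idP => [/eqP e|/eqP ->] //.
by move: (mnm1E i j); rewrite e mnm1E eqxx; case: (i == j).
Qed.

Lemma scomp_deg1 m' n (F : pseries R m') (G : 'I_m' -> pseries R n) (b : 'I_n) :
  F 0%MM = 0 -> (forall i, G i 0%MM = 0) ->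
  scomp F G U_(b)%MM = \sum_i F U_(i)%MM * G i U_(b)%MM.
Proof.
move=> hF hG.
rewrite (@scomp_specT _ _ _ _ (\sum_i F U_(i)%MM *: 'X_i)) //.
  rewrite comp_sum mcoeff_sum; apply: eq_bigr => i _.
  by rewrite comp_mpolyZ comp_mpolyXU -tnth_nth mcoeffZ Tr_coef.
move=> m; rewrite mdeg1 => hm; rewrite mcoeff_sum.
have [/eqP m0|m1] := eqVneq (mdeg m) 0%N.
  move: m0; rewrite mdeg_eq0 => /eqP ->; rewrite hF big1 // => i _.
  by rewrite mcoeffZ mcoeffX mnm1_eq0 mulr0.
have /mdeg1P [j /eqP ->] : mdeg m == 1%N by rewrite eqn_leq hm lt0n.
rewrite (bigD1 j) //= mcoeffZ mcoeffX eqxx mulr1 big1 ?addr0 // => i hi.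
by rewrite mcoeffZ mcoeffX mnm1_inj (negbTE hi) mulr0.
Qed.

Lemma scomp_assoc m1 m2 m3 (F : pseries R m1) (G : 'I_m1 -> pseries R m2)
  (K : 'I_m2 -> pseries R m3) mu :
  (forall i, G i 0%MM = 0) -> (forall j, K j 0%MM = 0) ->
  scomp (scomp F G) K mu = scomp F (fun i => scomp (G i) K) mu.
Proof.
move=> hG hK.
pose Gd := Tr (mdeg mu) G; pose Kd := Tr (mdeg mu) K; pose Fd := strunc (mdeg mu) F.
have hGd := Tr_ordge (mdeg mu) hG; have hKd := Tr_ordge (mdeg mu) hK.
have E1 : scomp (scomp F G) K mu = ((Fd \mPo Gd) \mPo Kd)@_mu.
  apply: (scomp_spec (D := mdeg mu) (D' := mdeg mu)); [exact: leqnn|exact: leqnn| | |exact: hKd].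
  - move=> m hm; symmetry.
    apply: (scomp_spec (D := mdeg mu) (D' := mdeg mu)); [exact: hm|exact: hm| | |exact: hGd].
      by move=> m0 hm0; rewrite mcoeff_strunc hm0.
    by move=> i m0 hm0; rewrite Tr_coef // hm0.
  - by move=> j m hm; rewrite Tr_coef.
have E2 : scomp F (fun i => scomp (G i) K) mu = (Fd \mPo [tuple (tnth Gd i) \mPo Kd | i < m1])@_mu.
  apply: (scomp_spec (D := mdeg mu) (D' := mdeg mu)); [exact: leqnn|exact: leqnn| | |].
  - by move=> m hm; rewrite mcoeff_strunc hm.
  - move=> i m hm; rewrite tnth_map tnth_ord_tuple; symmetry.
    apply: (scomp_spec (D := mdeg mu) (D' := mdeg mu)); [exact: hm|exact: hm| | |exact: hKd].
      by move=> m0 hm0; rewrite Tr_coef // hm0.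
    by move=> j m0 hm0; rewrite Tr_coef // hm0.
  - by move=> i; rewrite tnth_map tnth_ord_tuple; apply: comp_ordge.
rewrite E1 E2 comp_mpolyA. reflexivity.
Qed.
End Ser.

Section Gen.
Local Open Scope ring_scope.
Variable R : realType.
Local Notation C := (complex R).

Lemma lin_coef0 n (c : 'I_n -> C) :
  (\sum_b c b *: ('X_b : {mpoly C[n]}))@_0%MM = 0.
Proof.
rewrite mcoeff_sum big1 // => b _.
by rewrite mcoeffZ mcoeffX mnm1_eq0 mulr0.
Qed.

Lemma lin_coefU n (c : 'I_n -> C) b0 :
  (\sum_b c b *: ('X_b : {mpoly C[n]}))@_U_(b0)%MM = c b0.
Proof.
rewrite mcoeff_sum (bigD1 b0) //= mcoeffZ mcoeffX eqxx mulr1 big1 ?addr0 // => b hb.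
by rewrite mcoeffZ mcoeffX mnm1_inj (negbTE hb) mulr0.
Qed.

Lemma lin_ordge1 n (c : 'I_n -> C) : ordge 1 (\sum_b c b *: ('X_b : {mpoly C[n]})).
Proof. by move=> m /mdeg0_eq ->; rewrite lin_coef0. Qed.

Lemma deg_lt2 n (m : 'X_{1..n}) : (mdeg m < 2)%N -> m = 0%MM \/ exists c, m = U_(c)%MM.
Proof.
move=> h; have [/eqP m0|m1] := eqVneq (mdeg m) 0%N.
  by left; move: m0; rewrite mdeg_eq0 => /eqP.
right; have /mdeg1P [c /eqP ->] : mdeg m == 1%N by rewrite eqn_leq -ltnS h lt0n.
by exists c.
Qed.

Lemma lin_id n N (L : 'M[C]_(N, n)) (B : 'M[C]_(n, N)) :
  L *m B = 1%:M ->
  [tuple (tnth [tuple \sum_b L a b *: ('X_b : {mpoly C[n]}) | a < N] i)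
     \mPo [tuple \sum_c B b c *: ('X_c : {mpoly C[N]}) | b < n] | i < N]
  = [tuple 'X_i | i < N].
Proof.
move=> hB; apply: eq_from_tnth => a; rewrite !tnth_map !tnth_ord_tuple.
rewrite comp_sum.
under eq_bigr do rewrite comp_mpolyZ comp_mpolyXU -tnth_nth tnth_map tnth_ord_tuple scaler_sumr.
rewrite exchange_big /=.
under eq_bigr do (under eq_bigr do rewrite scalerA; rewrite -scaler_suml).
have Eac : forall c, \sum_b L a b * B b c = (a == c)%:R.
  by move=> c; have := congr1 (fun M : 'M[C]_N => M a c) hB; rewrite !mxE.
under eq_bigr do rewrite Eac.
rewrite (bigD1 a) //= eqxx scale1r big1 ?addr0 // => c hc.
by rewrite eq_sym (negbTE hc) scale0r.
Qed.

Lemma ord_from_generic n N (Z1 : 'I_N -> pseries R n) (f : pseries R N) k :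
  (forall a, Z1 a 0%MM = 0) ->
  row_free (\matrix_(a, b) Z1 a (mnm1 b) : 'M[C]_(N, n)) ->
  (forall mu, (mdeg mu < k)%N -> scomp f Z1 mu = 0) -> ord_ge k f.
Proof.
move=> hZ0 /row_freeP [B hB] hk.
set L := \matrix_(a, b) Z1 a (mnm1 b) in hB.
have step : forall j, (j < k)%N -> (forall nu, (mdeg nu < j)%N -> f nu = 0) ->
    forall nu, mdeg nu = j -> f nu = 0.
  move=> j hj hlow nu hnu.
  pose F := strunc j f.
  have hF : ordge j F.
    by move=> m hm; rewrite mcoeff_strunc ltnW // hlow.
  pose Lx := [tuple \sum_b L a b *: ('X_b : {mpoly C[n]}) | a < N].
  pose Q := Tr j.+1 Z1.
  have hLx1 : forall a, ordge 1 (tnth Lx a).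
    by move=> a; rewrite tnth_map tnth_ord_tuple; apply: lin_ordge1.
  have hnear : forall a, near 1 (tnth Q a) (tnth Lx a).
    move=> a; split; [exact: Tr_ordge | exact: hLx1 |].
    move=> m /deg_lt2 [->|[c ->]]; rewrite mcoeffB Tr_coef ?mdeg0 ?mdeg1 //;
      rewrite tnth_map tnth_ord_tuple.
      by rewrite lin_coef0 hZ0 subrr.
    by rewrite lin_coefU mxE subrr.
  have hFL : ordge j.+1 (F \mPo Lx).
    move=> m hm; have [hm'|hm'] := ltnP (mdeg m) j.
      exact: (comp_ordge hLx1 hF).
    have emj : mdeg m = j by apply/eqP; rewrite eqn_leq hm'  -ltnS hm.
    have := comp_near hnear hF hm; rewrite mcoeffB => /eqP; rewrite subr_eq0 => /eqP <-.
    have e : scomp f Z1 m = (F \mPo Q)@_m.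
      apply: (scomp_spec (D := j) (D' := j.+1)); [by rewrite emj | by rewrite emj | | | exact: Tr_ordge].
      - by move=> m0 hm0; rewrite mcoeff_strunc hm0.
      - by move=> i m0 hm0; rewrite Tr_coef.
    rewrite -e; apply: hk; rewrite emj; exact: hj.
  pose By := [tuple \sum_c B b c *: ('X_c : {mpoly C[N]}) | b < n].
  have hBy1 : forall b, ordge 1 (tnth By b).
    by move=> b; rewrite tnth_map tnth_ord_tuple; apply: lin_ordge1.
  have eF : F = (F \mPo Lx) \mPo By.
    rewrite comp_mpolyA lin_id //; symmetry; exact: comp_mpoly_id.
  have := comp_ordge hBy1 hFL; rewrite -eF => /(_ nu); rewrite hnu ltnSn.
  by rewrite mcoeff_strunc hnu leqnn => /(_ isT).
suff H : forall j, (j <= k)%N -> forall nu, (mdeg nu < j)%N -> f nu = 0.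
  by move=> mu hmu; apply: (H k).
elim=> [|j ih] hj nu hnu //.
have [h|h] := ltnP (mdeg nu) j; first by apply: ih => //; exact: ltnW.
apply: (step j hj) => //; first by apply: ih; exact: ltnW.
by apply/eqP; rewrite eqn_leq h -ltnS hnu.
Qed.

End Gen.

Section LA.
Local Open Scope ring_scope.
Variable R : realType.
Local Notation C := (complex R).

Lemma splitL m n (a : 'I_m) : split (lshift n a) = inl a.
Proof. exact: (unsplitK (inl a)). Qed.
Lemma splitR m n (b : 'I_n) : split (rshift m b) = inr b.
Proof. exact: (unsplitK (inr b)). Qed.

Lemma split_cases m n (i : 'I_(m + n)) :
  (exists a, i = lshift n a) \/ (exists b, i = rshift m b).
Proof.
case: (splitP i) => [a ha|b hb]; [left; exists a|right; exists b]; exact: val_inj.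
Qed.

Lemma ReSum (I : Type) (r : seq I) (P : pred I) (F : I -> C) :
  complex.Re (\sum_(i <- r | P i) F i) = \sum_(i <- r | P i) complex.Re (F i).
Proof. by apply: (big_morph (@complex.Re R)) => // x y; case: x; case: y. Qed.

Lemma ImSum (I : Type) (r : seq I) (P : pred I) (F : I -> C) :
  complex.Im (\sum_(i <- r | P i) F i) = \sum_(i <- r | P i) complex.Im (F i).
Proof. by apply: (big_morph (@complex.Im R)) => // x y; case: x; case: y. Qed.

Lemma ReJ2 (x : C) : complex.Re (x + conjc x) = complex.Re x + complex.Re x.
Proof. by case: x. Qed.

Lemma Jac_pt (x y : C) :
  complex.Re (x + conjc x) * complex.Re y
  + complex.Re ('i%C * (x - conjc x)) * complex.Im y = complex.Re (x * y) *+ 2.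
Proof. case: x => a b; case: y => c e /=; ring. Qed.

Lemma Re_mulr (z : C) (r : R) : complex.Re (z * r%:C%C) = complex.Re z * r.
Proof. case: z => a b /=; ring. Qed.
Lemma Im_mulr (z : C) (r : R) : complex.Im (z * r%:C%C) = complex.Im z * r.
Proof. case: z => a b /=; ring. Qed.

Lemma Re_wi (w : C) : complex.Re (w * ('i%C * (complex.Im w)%:C%C)) = - (complex.Im w) ^+ 2.
Proof. case: w => a b /=; ring. Qed.
Lemma Im_wi (w : C) : complex.Im (w * ('i%C * (complex.Re w)%:C%C)) = (complex.Re w) ^+ 2.
Proof. case: w => a b /=; ring. Qed.
Lemma Re_ir (r : R) : complex.Re ('i%C * r%:C%C) = 0.
Proof. rewrite /=; ring. Qed.

Lemma realvalued_conj N (rho : pseries R (N + N)) a :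
  real_valued rho -> rho U_(rshift N a)%MM = conjc (rho U_(lshift N a)%MM).
Proof.
move=> h; rewrite -h; congr (rho _); apply/mnmP => i; rewrite mnmE !mnm1E /swapZ.
case: (split_cases i) => [[b ->]|[b ->]]; rewrite ?splitL ?splitR.
  by rewrite eq_rlshift eq_lrshift.
by rewrite !eq_rshift !eq_lshift.
Qed.

Lemma ker_col (F : fieldType) d N2 n (J : 'M[F]_(d, N2)) (P : 'M[F]_(N2, n)) :
  row_free J -> \rank P = n -> (n + d = N2)%N -> J *m P = 0 ->
  forall y : 'cV[F]_N2, J *m y = 0 -> exists x : 'cV[F]_n, y = P *m x.
Proof.
move=> hJ hP hd hJP y hy.
have sP : (P^T <= kermx J^T)%MS by rewrite sub_kermx -trmx_mul hJP trmx0.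
have [_ E] := mxrank_leqif_sup sP.
have sK : (kermx J^T <= P^T)%MS.
  rewrite -E mxrank_ker !mxrank_tr hP; move/eqP: hJ => ->; apply/eqP; lia.
have sy : (y^T <= kermx J^T)%MS by rewrite sub_kermx -trmx_mul hy trmx0.
have /submxP [x hx] := submx_trans sy sK.
by exists x^T; rewrite -[y]trmxK hx trmx_mul trmxK.
Qed.

End LA.

Section GR.
Local Open Scope ring_scope.
Variable R : realType.
Local Notation C := (complex R).

Lemma sconjZ0 m n (W : 'I_m -> pseries R n) :
  (forall a, W a 0%MM = 0) -> forall i, sconjZ W i 0%MM = 0.
Proof.
move=> h i; rewrite /sconjZ; case: (split i) => a; first exact: h.
by rewrite /sconj h conjc0.
Qed.

Lemma generic_rowfree N d n (rho : 'I_d -> pseries R (N + N)) (Z1 : 'I_N -> pseries R n) :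
  defining_fun rho -> generic rho -> param rho Z1 ->
  row_free (\matrix_(a, b) Z1 a (mnm1 b) : 'M[C]_(N, n)).
Proof.
case=> h0 _ hreal hJ hgen [hdim hZ0 _ hcomp hrank].
set g := cgrad0 rho in hgen.
set LM := \matrix_(a, b) Z1 a (mnm1 b).
have hconj : forall j a, rho j U_(rshift N a)%MM = conjc (g j a).
  by move=> j a; rewrite mxE realvalued_conj.
have hlin : forall j b, \sum_a (g j a * LM a b + conjc (g j a * LM a b)) = 0.
  move=> j b; have E := hcomp j U_(b)%MM.
  rewrite scomp_deg1 in E; last 2 first.
  - exact: h0.
  - exact: sconjZ0.
  rewrite -[RHS]E big_split_ord big_split /=; congr (_ + _); apply: eq_bigr => a _.
    by rewrite /sconjZ splitL !mxE.
  by rewrite /sconjZ splitR /sconj hconj !mxE rmorphM.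
have hRe : forall j b, \sum_a complex.Re (g j a * LM a b) = 0.
  move=> j b; have := congr1 (@complex.Re R) (hlin j b); rewrite ReSum.
  under eq_bigr do rewrite ReJ2.
  rewrite big_split /= => H; move: H; set S := \sum_a _; move=> H; lra.
set J := real_jac0 rho in hJ.
set P := param_jac0 Z1 in hrank.
have hJP : J *m P = 0.
  apply/matrixP => j b; rewrite !mxE big_split_ord /= -big_split /=.
  transitivity ((\sum_a complex.Re (g j a * LM a b)) *+ 2); last by rewrite hRe mul0rn.
  rewrite -sumrMnl; apply: eq_bigr => a _.
  by rewrite !mxE !splitL !splitR hconj -Jac_pt !mxE.
have hF1 : forall u : 'rV[C]_N, u *m LM = 0 -> forall v : 'cV[C]_N,
    (forall j, complex.Re ((g *m v) j 0) = 0) -> u *m v = 0.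
  move=> u hu v hv.
  pose y : 'cV[R]_(N + N) := \col_i (match split i with
       inl a => complex.Re (v a 0) | inr a => complex.Im (v a 0) end).
  have hy : J *m y = 0.
    apply/matrixP => j z; rewrite !mxE big_split_ord /= -big_split /=.
    transitivity ((complex.Re ((g *m v) j 0)) *+ 2); last by rewrite hv mul0rn.
    rewrite mxE ReSum -sumrMnl; apply: eq_bigr => a _.
    have hg : rho j U_(lshift N a)%MM = g j a by rewrite mxE.
    by rewrite !mxE !splitL !splitR hconj hg -Jac_pt.
  have [x hx] := ker_col hJ hrank hdim hJP hy.
  pose xc : 'cV[C]_n := \col_b ((x b 0)%:C)%C.
  have hv' : v = LM *m xc.
    apply/matrixP => a z; rewrite (ord1 z) !mxE.
    apply/eqP; rewrite eq_complex; apply/andP; split; apply/eqP.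
      have := congr1 (fun M : 'cV[R]_(N + N) => M (lshift N a) 0) hx.
      rewrite !mxE splitL => ->; rewrite ReSum; apply: eq_bigr => b _.
      by rewrite !mxE splitL Re_mulr.
    have := congr1 (fun M : 'cV[R]_(N + N) => M (rshift N a) 0) hx.
    rewrite !mxE splitR => ->; rewrite ImSum; apply: eq_bigr => b _.
    by rewrite !mxE splitR Im_mulr.
  by rewrite hv' mulmxA hu mul0mx.
have hF2 : forall u : 'rV[C]_N, u *m LM = 0 -> exists w : 'rV[C]_d, u = w *m g.
  move=> u hu.
  have hKu : u *m (kermx g^T)^T = 0.
    apply/matrixP => z i; rewrite (ord1 z).
    have e0 : g *m (row i (kermx g^T))^T = 0.
      by apply: trmx_inj; rewrite trmx_mul trmxK -row_mul mulmx_ker row0 !trmx0.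
    have H := hF1 u hu (row i (kermx g^T))^T.
    rewrite e0 in H.
    have H' : u *m (row i (kermx g^T))^T = 0 by apply: H => j; rewrite mxE.
    transitivity ((u *m (row i (kermx g^T))^T) 0 0); last by rewrite H' !mxE.
    by rewrite !mxE; apply: eq_bigr => k _; rewrite !mxE.
  have sub_u : (u <= kermx (kermx g^T)^T)%MS by rewrite sub_kermx hKu.
  have sub_g : (g <= kermx (kermx g^T)^T)%MS.
    by rewrite sub_kermx; apply/eqP; apply: trmx_inj; rewrite trmx_mul trmxK mulmx_ker trmx0.
  have [_ E] := mxrank_leqif_sup sub_g.
  have sub_kg : (kermx (kermx g^T)^T <= g)%MS.
    rewrite -E mxrank_ker mxrank_tr mxrank_ker mxrank_tr subKn //.
    exact: rank_leq_col.
  by have /submxP [w ->] := submx_trans sub_u sub_kg; exists w.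
have hF3 : forall u : 'rV[C]_N, u *m LM = 0 -> u = 0.
  move=> u hu; have [w hw] := hF2 u hu.
  have [Bg hBg] := row_freeP hgen.
  have key : forall t : 'cV[R]_d,
      (w *m \col_j ('i%C * (t j 0)%:C%C)) 0 0 = 0.
    move=> t; set c := \col_j _.
    have := hF1 u hu (Bg *m c).
    rewrite mulmxA hBg mul1mx hw -mulmxA (mulmxA g) hBg mul1mx => H.
    have -> : w *m c = 0.
      by apply: H => j; rewrite mxE Re_ir.
    by rewrite mxE.
  have hIm : forall j, complex.Im (w 0 j) = 0.
    have := key (\col_j complex.Im (w 0 j)); rewrite mxE => /(congr1 (@complex.Re R)).
    rewrite ReSum.
    under eq_bigr do rewrite !mxE Re_wi.
    rewrite sumrN => /eqP; rewrite oppr_eq0 => /eqP /psumr_eq0P H j.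
    by apply/eqP; rewrite -sqrf_eq0; apply/eqP; apply: H => // i _; exact: sqr_ge0.
  have hRe' : forall j, complex.Re (w 0 j) = 0.
    have := key (\col_j complex.Re (w 0 j)); rewrite mxE => /(congr1 (@complex.Im R)).
    rewrite ImSum.
    under eq_bigr do rewrite !mxE Im_wi.
    move=> /psumr_eq0P H j.
    by apply/eqP; rewrite -sqrf_eq0; apply/eqP; apply: H => // i _; exact: sqr_ge0.
  have hw0 : w = 0.
    apply/matrixP => i j; rewrite (ord1 i) mxE.
    by apply/eqP; rewrite eq_complex /= hRe' hIm eqxx.
  by rewrite hw hw0 mul0mx.
rewrite -kermx_eq0; apply/eqP/row_matrixP => i; rewrite row0; apply: hF3.
by rewrite -row_mul mulmx_ker row0.
Qed.

End GR.

Section Main.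
Local Open Scope ring_scope.
Variable R : realType.
Local Notation C := (complex R).

Lemma sX0 n (i : 'I_n) : @sX R n i 0%MM = 0.
Proof. by rewrite /sX eq_sym mnm1_eq0. Qed.

Lemma szero0 n : @szero R n 0%MM = 0.
Proof. by []. Qed.

Lemma emb_comp N1 N2 n (F : pseries R (N1 + N1)) (V : 'I_(N1 + N2) -> pseries R n) mu :
  (forall a, V a 0%MM = 0) ->
  scomp (scomp F (fun i => @sX R _ (emb1 N2 i))) (sconjZ V) mu
  = scomp F (sconjZ (fun a => V (lshift N2 a))) mu.
Proof.
move=> hV; rewrite scomp_assoc; last exact: sconjZ0; last by move=> i; exact: sX0.
have -> : (fun i => scomp (@sX R _ (emb1 N2 i)) (sconjZ V)) = sconjZ (fun a => V (lshift N2 a)).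
  apply: functional_extensionality => i; apply: functional_extensionality => m.
  rewrite scomp_sX; last exact: sconjZ0.
  rewrite /emb1 /sconjZ; case: (split_cases i) => [[a ->]|[a ->]].
    by rewrite (@splitL N1 N1 a) (@splitL (N1 + N2) (N1 + N2) (lshift N2 a)).
  by rewrite (@splitR N1 N1 a) (@splitR (N1 + N2) (N1 + N2) (lshift N2 a)).
reflexivity.
Qed.

Definition Pp N1 N2 : 'I_(N1 + N2) -> pseries R N1 :=
  fun i => match split i with inl a => @sX R _ a | inr _ => @szero R N1 end.

Lemma Pp0 N1 N2 i : @Pp N1 N2 i 0%MM = 0.
Proof. by rewrite /Pp; case: (split i) => a; [exact: sX0|]. Qed.

Lemma restr1_at0 N1 N2 (f : pseries R (N1 + N2)) : restr1 f 0%MM = f 0%MM.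
Proof. exact: (scomp_at0 f (@Pp0 N1 N2)). Qed.

Lemma restr1_deg1 N1 N2 (f : pseries R (N1 + N2)) b :
  f 0%MM = 0 -> restr1 f U_(b)%MM = f U_(lshift N2 b)%MM.
Proof.
move=> hf; rewrite /restr1 (scomp_deg1 (G := @Pp N1 N2)); last exact: Pp0; last exact: hf.
rewrite big_split_ord /= [X in _ + X]big1 ?addr0; last first.
  by move=> i _ /=; rewrite /Pp (@splitR N1 N2 i) mulr0.
rewrite (bigD1 b) //= big1 ?addr0; last first.
  move=> i hi /=; rewrite /Pp (@splitL N1 N2 i) /sX.
  by rewrite mnm1_inj eq_sym (negbTE hi) mulr0.
by rewrite /Pp (@splitL N1 N2 b) /sX eqxx mulr1.
Qed.

Lemma re_im0 (x : C) : x / 2%:R + conjc x / 2%:R = 0 ->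
  x / (2%:R * 'i%C) - conjc x / (2%:R * 'i%C) = 0 -> x = 0.
Proof.
have h2 : (2%:R : C) != 0 by rewrite pnatr_eq0.
have hi : ('i%C : C) != 0 by apply/eqP; case => /eqP; rewrite oner_eq0.
rewrite -mulrDl -mulrBl => /eqP; rewrite mulf_eq0 invr_eq0 (negbTE h2) orbF => /eqP h1.
move/eqP; rewrite mulf_eq0 invr_eq0 mulf_eq0 (negbTE h2) (negbTE hi) !orbF => /eqP h3.
move: h1 h3; case: x => a b /= [h1 h1'] [h3 h3'].
by apply/eqP; rewrite eq_complex /=; apply/andP; split; apply/eqP; lra.
Qed.

End Main.


Theorem lemma4p4 (R : realType) (N1 N2 d1 k : nat)
  (rho1 rho1' : 'I_d1 -> pseries R (N1 + N1))
  (H : 'I_(N1 + N2) -> pseries R (N1 + N2)) :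
  (1 < k)%N ->
  defining_fun rho1 -> generic rho1 ->
  defining_fun rho1' -> generic rho1' ->
  kequiv k (@prod_def R N1 N2 d1 rho1) (@prod_def R N1 N2 d1 rho1') H ->
  (forall b : 'I_N2, ord_ge k (restr1 (H (rshift N1 b))))
  /\ kequiv k rho1 rho1' (fun a : 'I_N1 => restr1 (H (lshift N2 a))).
Proof.
move=> hk hdef hgen hdef' hgen' [[hH0 hHinv] [n [Z [hpar hord]]]].
have hpar' := hpar.
case: hpar' => hdim hZ0 hZconv hcomp hrank.
pose Z1 := fun a : 'I_N1 => Z (lshift N2 a).
have lin0 : forall (rho : 'I_d1 -> pseries R (N1 + N1)) (V : 'I_(N1 + N2) -> pseries R n),
    (forall a, V a 0%MM = 0%R) -> forall b mu,
    scomp (@prod_def R N1 N2 d1 rho (rshift d1 (lshift N2 b))) (sconjZ V) mu = 0%R ->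
    scomp (@prod_def R N1 N2 d1 rho (rshift d1 (rshift N2 b))) (sconjZ V) mu = 0%R ->
    V (rshift N1 b) mu = 0%R.
  move=> rho V hV0 b mu E1 E2.
  rewrite (@scomp_lin2 R _ _ _ _ (2%:R^-1)%R (2%:R^-1)%R
     (lshift (N1 + N2) (rshift N1 b)) (rshift (N1 + N2) (rshift N1 b))) in E1; last first.
  - move=> m; rewrite /prod_def (@splitR d1 (N2 + N2) (lshift N2 b)) (@splitL N2 N2 b).
    ring.
  - exact: sconjZ0.
  rewrite (@scomp_lin2 R _ _ _ _ ((2%:R * 'i%C)^-1)%R (- (2%:R * 'i%C)^-1)%R
     (lshift (N1 + N2) (rshift N1 b)) (rshift (N1 + N2) (rshift N1 b))) in E2; last first.
  - move=> m; rewrite /prod_def (@splitR d1 (N2 + N2) (rshift N2 b)) (@splitR N2 N2 b).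
    ring.
  - exact: sconjZ0.
  move: E1 E2; rewrite /sconjZ (@splitL (N1 + N2) (N1 + N2) (rshift N1 b))
    (@splitR (N1 + N2) (N1 + N2) (rshift N1 b)) /sconj => E1 E2.
  apply: re_im0.
    by apply: eq_trans E1; ring.
  by apply: eq_trans E2; ring.
have hZ2 : forall b mu, Z (rshift N1 b) mu = 0%R.
  move=> b mu; apply: (lin0 rho1 Z hZ0 b mu); exact: hcomp.
have hZ1_0 : forall a, Z1 a 0%MM = 0%R by move=> a; exact: hZ0.
have restr_comp : forall f mu, scomp (restr1 f) Z1 mu = scomp f Z mu.
  move=> f mu; rewrite /restr1 scomp_assoc; last exact: hZ1_0; last exact: (@Pp0 R N1 N2).
  have -> : (fun i => scomp (match split i with inl a => @sX R _ a | inr _ => @szero R N1 end) Z1) = Z.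
    apply: functional_extensionality => i; apply: functional_extensionality => m.
    case: (split_cases i) => [[a ->]|[a ->]].
      by rewrite (@splitL N1 N2 a) scomp_sX.
    rewrite (@splitR N1 N2 a) scomp_szero; last exact: hZ1_0.
    by rewrite hZ2.
  reflexivity.
have hpar1 : param rho1 Z1.
  split.
  - lia.
  - exact: hZ1_0.
  - by move=> a; exact: hZconv.
  - move=> j mu; have E := hcomp (lshift (N2 + N2) j) mu.
    rewrite /prod_def (@splitL d1 (N2 + N2) j) emb_comp in E; last exact: hZ0.
    exact: E.
  - have s1 : (param_jac0 Z1 <= param_jac0 Z)%MS.
      apply/row_subP => i; case: (split_cases i) => [[a ->]|[a ->]].
        have -> : row (lshift N1 a) (param_jac0 Z1) = row (lshift (N1 + N2) (lshift N2 a)) (param_jac0 Z).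
          apply/rowP => b; rewrite !mxE (@splitL N1 N1 a) (@splitL (N1 + N2) (N1 + N2) (lshift N2 a)).
          reflexivity.
        exact: row_sub.
      have -> : row (rshift N1 a) (param_jac0 Z1) = row (rshift (N1 + N2) (lshift N2 a)) (param_jac0 Z).
        apply/rowP => b; rewrite !mxE (@splitR N1 N1 a) (@splitR (N1 + N2) (N1 + N2) (lshift N2 a)).
        reflexivity.
      exact: row_sub.
    have s2 : (param_jac0 Z <= param_jac0 Z1)%MS.
      apply/row_subP => i; case: (split_cases i) => [[c ->]|[c ->]];
        case: (split_cases c) => [[a ->]|[a ->]].
      + have -> : row (lshift (N1 + N2) (lshift N2 a)) (param_jac0 Z) = row (lshift N1 a) (param_jac0 Z1).
          apply/rowP => b; rewrite !mxE (@splitL N1 N1 a) (@splitL (N1 + N2) (N1 + N2) (lshift N2 a)).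
          reflexivity.
        exact: row_sub.
      + have -> : row (lshift (N1 + N2) (rshift N1 a)) (param_jac0 Z) = 0%R.
          apply/rowP => b; rewrite !mxE (@splitL (N1 + N2) (N1 + N2) (rshift N1 a)) hZ2.
          reflexivity.
        exact: sub0mx.
      + have -> : row (rshift (N1 + N2) (lshift N2 a)) (param_jac0 Z) = row (rshift N1 a) (param_jac0 Z1).
          apply/rowP => b; rewrite !mxE (@splitR N1 N1 a) (@splitR (N1 + N2) (N1 + N2) (lshift N2 a)).
          reflexivity.
        exact: row_sub.
      + have -> : row (rshift (N1 + N2) (rshift N1 a)) (param_jac0 Z) = 0%R.
          apply/rowP => b; rewrite !mxE (@splitR (N1 + N2) (N1 + N2) (rshift N1 a)) hZ2.
          reflexivity.
        exact: sub0mx.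
    have h1 := mxrankS s1; have h2 := mxrankS s2; rewrite hrank in h1 h2.
    by apply/eqP; rewrite eqn_leq h1 h2.
have hL := generic_rowfree hdef hgen hpar1.
have hHZ0 : forall a, scomp (H a) Z 0%MM = 0%R.
  by move=> a; rewrite scomp_at0; [exact: hH0 | exact: hZ0].
have hpart1 : forall b, ord_ge k (restr1 (H (rshift N1 b))).
  move=> b; apply: (@ord_from_generic R n N1 Z1 _ k hZ1_0 hL) => mu hmu.
  rewrite restr_comp.
  apply: (lin0 rho1' (fun a => scomp (H a) Z) hHZ0 b mu); exact: hord.
split; first exact: hpart1.
split.
  split.
    by move=> a /=; rewrite restr1_at0; exact: hH0.
  move: hHinv; set A := ((\matrix_(a, b) H a U_(b)%MM)%R : 'M_(N1 + N2)) => hHinv.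
  have eA1 : ((\matrix_(a, b) (fun a0 => restr1 (H (lshift N2 a0))) a U_(b)%MM)%R : 'M_N1)
      = ulsubmx A.
    apply/matrixP => a b; rewrite !mxE restr1_deg1; last exact: hH0.
    reflexivity.
  have eA2 : dlsubmx A = 0%R.
    apply/matrixP => b c; rewrite !mxE -restr1_deg1; last exact: hH0.
    by apply: (hpart1 b); rewrite mdeg1.
  rewrite eA1 unitmxE unitfE.
  move: hHinv; rewrite unitmxE unitfE -[A]submxK eA2 det_ublock mulf_eq0 negb_or.
  by rewrite block_mxKul; case/andP.
exists n, Z1; split; first exact: hpar1.
move=> j mu hmu.
have E := hord (lshift (N2 + N2) j) mu hmu.
rewrite /prod_def (@splitL d1 (N2 + N2) j) emb_comp in E; last exact: hHZ0.
have eqf : (fun a => scomp (restr1 (H (lshift N2 a))) Z1) = (fun a => scomp (H (lshift N2 a)) Z).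
  apply: functional_extensionality => a; apply: functional_extensionality => m.
  exact: restr_comp.
rewrite /= eqf; exact: E.
Qed.
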